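(* Let $X$ be as in the standing setting with skeleton $X_1,\dots,X_k$. Suppose $x\in X$ lies in no $\operatorname{span}X_l$ and $x\in\operatorname{pos}\{x_i,x_j\}$ with $x_i\in X_i$, $x_j\in X_j$, $i\ne j$. If $y\in X\setminus X_i$ lies in $\operatorname{span}X_i$, then the support $S_y$ of $y$ does not contain $x_i$.
   Context: Standing setting: $X\subset\mathbb R^n\setminus\{0\}$ is a finite set such that $0$ lies in the interior of $\operatorname{conv}X$, no element of $X$ is a positive multiple of another, and every $n+1$ points of $X$ are in good position. A finite set $A$ is in conical position if $0\notin\operatorname{conv}A$ and no point of $A$ lies in the positive hull (set of nonnegative linear combinations, denoted $\operatorname{pos}$) of the other points; it is in good position otherwise. A skeleton of $X$ is a collection of pairwise disjoint subsets $X_1,\dots,X_k\subseteq X$ such that each $X_i$ is the vertex set of a simplex whose relative interior contains $0$ and $\mathbb R^n=\operatorname{span}X_1\oplus\cdots\oplus\operatorname{span}X_k$. For a nonzero $y\in\operatorname{span}X_i$, its support $S_y$ is the minimal subset of $X_i$ whose positive hull contains $y$. *)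

(* Defs.v *)
From HB Require Import structures.
From mathcomp Require Import all_boot all_order all_algebra.
From mathcomp Require Import finmap.
From mathcomp Require Import reals.

Set Implicit Arguments.
Unset Strict Implicit.
Unset Printing Implicit Defensive.

Import Order.TTheory GRing.Theory Num.Theory.
Local Open Scope ring_scope.
Local Open Scope fset_scope.

Section Defs.
Variables (R : realType) (n : nat).
Notation V := 'rV[R]_n.

Definition in_conv (A : {fset V}) (v : V) : Prop :=
  exists c : V -> R, (forall a, a \in A -> 0 <= c a) /\
    \sum_(a <- A) c a = 1 /\ v = \sum_(a <- A) c a *: a.

Definition in_pos (A : {fset V}) (v : V) : Prop :=
  exists c : V -> R, (forall a, a \in A -> 0 <= c a) /\
    v = \sum_(a <- A) c a *: a.

Definition in_span (A : {fset V}) (v : V) : Prop :=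
  exists c : V -> R, v = \sum_(a <- A) c a *: a.

(* interior (w.r.t. the standard topology of R^n, using sup-norm balls) *)
Definition in_interior_conv (A : {fset V}) (v : V) : Prop :=
  exists eps : R, 0 < eps /\
    forall w : V, (forall j, `|w 0 j - v 0 j| < eps) -> in_conv A w.

Definition conical_position (A : {fset V}) : Prop :=
  ~ in_conv A 0 /\ forall a, a \in A -> ~ in_pos (A `\ a) a.

Definition good_position (A : {fset V}) : Prop := ~ conical_position A.

Definition standing_setting (X : {fset V}) : Prop :=
  [/\ (0 : V) \notin X,
      in_interior_conv X 0,
      (forall a b, a \in X -> b \in X -> a != b ->
         forall t : R, 0 < t -> a <> t *: b)
    & (forall A : {fset V}, A `<=` X -> #|` A| = n.+1 -> good_position A)].

Definition aff_indep (A : {fset V}) : Prop :=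
  forall c : V -> R, \sum_(a <- A) c a = 0 -> \sum_(a <- A) c a *: a = 0 ->
    forall a, a \in A -> c a = 0.

(* A is the vertex set of a simplex whose relative interior contains 0:
   A is nonempty, affinely independent, and 0 has strictly positive
   barycentric coordinates w.r.t. A *)
Definition simplex_relint0 (A : {fset V}) : Prop :=
  [/\ A != fset0, aff_indep A &
      exists c : V -> R, (forall a, a \in A -> 0 < c a) /\
        \sum_(a <- A) c a = 1 /\ \sum_(a <- A) c a *: a = 0].

Definition direct_sum_spans (k : nat) (Xs : 'I_k -> {fset V}) : Prop :=
  (forall v : V, exists w : 'I_k -> V,
      (forall i, in_span (Xs i) (w i)) /\ v = \sum_(i < k) w i) /\
  (forall w : 'I_k -> V, (forall i, in_span (Xs i) (w i)) ->
      \sum_(i < k) w i = 0 -> forall i, w i = 0).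

Definition skeleton (X : {fset V}) (k : nat) (Xs : 'I_k -> {fset V}) : Prop :=
  [/\ forall i, Xs i `<=` X,
      forall i j, i != j -> [disjoint Xs i & Xs j],
      forall i, simplex_relint0 (Xs i)
    & direct_sum_spans Xs].

Definition is_support (B : {fset V}) (y : V) (S : {fset V}) : Prop :=
  [/\ S `<=` B, in_pos S y &
      forall T : {fset V}, T `<` S -> ~ in_pos T y].

End Defs.

(* Main.v *)
Require Import Defs.
From HB Require Import structures.
From mathcomp Require Import all_boot all_order all_algebra.
From mathcomp Require Import finmap.
From mathcomp Require Import reals.
From mathcomp.algebra_tactics Require Import ring lra.
Import Order.TTheory GRing.Theory Num.Theory.
Local Open Scope ring_scope.
Local Open Scope fset_scope.
Set Implicit Arguments.
Unset Strict Implicit.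
Unset Printing Implicit Defensive.

Section Helpers.
Variables (R : realType) (n : nat).
Notation V := 'rV[R]_n.
Implicit Types (A B S T : {fset V}) (v w : V).

Lemma sum_single A a (F : V -> V) : a \in A -> (forall v, v \in A -> v != a -> F v = 0) ->
  \sum_(v <- A) F v = F a.
Proof.
move=> aA H; rewrite (big_fsetD1 _ aA) /= big1_fset ?addr0 // => v.
by rewrite in_fsetD1 => /andP[va vA] _; apply: H.
Qed.

Lemma span_mem A a : a \in A -> in_span A a.
Proof.
move=> aA; exists (fun v => (v == a)%:R).
rewrite (sum_single aA) ?eqxx ?scale1r // => v _ /negPf ->; by rewrite scale0r.
Qed.

Lemma span_add A v w : in_span A v -> in_span A w -> in_span A (v + w).
Proof.
move=> [c ->] [d ->]; exists (fun a => (c a + d a)%R).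
by rewrite -big_split /=; apply: eq_bigr => a _; rewrite scalerDl.
Qed.

Lemma span_scale A v (t : R) : in_span A v -> in_span A (t *: v).
Proof.
move=> [c ->]; exists (fun a => t * c a).
by rewrite scaler_sumr; apply: eq_bigr => a _; rewrite scalerA.
Qed.

Lemma span_sum A (mu : V -> R) : in_span A (\sum_(a <- A) mu a *: a).
Proof. by exists mu. Qed.

Lemma span_sub A B v : A `<=` B -> in_span A v -> in_span B v.
Proof.
move=> AB [c ->]; exists (fun a => if a \in A then c a else 0).
rewrite -(big_fset_incl _ AB); last by move=> x _ /negPf ->; rewrite scale0r.
by apply: eq_fbigr => x xA _ /=; rewrite xA.
Qed.

Lemma span0 A : in_span A 0.
Proof. by exists (fun _ => 0); rewrite big1 // => a _; rewrite scale0r. Qed.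

Lemma ds2 X k (Xs : 'I_k -> {fset V}) i j u w : skeleton X Xs -> i != j ->
  in_span (Xs i) u -> in_span (Xs j) w -> (u + w = 0)%R -> u = 0 /\ w = 0.
Proof.
move=> [_ _ _ [_ Hds]] ij hu hw huw.
pose f l := if l == i then u else if l == j then w else 0.
have fs : forall l, in_span (Xs l) (f l).
  move=> l; rewrite /f; case: eqP => [->|_] //; case: eqP => [->|_] //; exact: span0.
have ji : j != i by rewrite eq_sym.
have fi : f i = u by rewrite /f eqxx.
have fj : f j = w by rewrite /f (negbTE ji) eqxx.
have sum : \sum_(l < k) f l = 0.
  rewrite (bigD1 i) //= (bigD1 j) /=; last by [].
  rewrite big1 => [| l /andP[li lj]]; first by rewrite fi fj addr0.
  by rewrite /f (negbTE li) (negbTE lj).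
have H := Hds f fs sum.
by split; [rewrite -fi | rewrite -fj]; apply: H.
Qed.

Lemma drop_zero S y (c : V -> R) s0 : s0 \in S -> c s0 = 0 ->
  (forall a, a \in S -> 0 <= c a) -> y = \sum_(a <- S) c a *: a ->
  in_pos (S `\ s0) y.
Proof.
move=> s0S c0 cpos ->; exists c; split.
  by move=> a; rewrite in_fsetD1 => /andP[_]; apply: cpos.
by rewrite (big_fsetD1 _ s0S) /= c0 scale0r add0r.
Qed.

Lemma seq_min (T : eqType) (f : T -> R) (s : seq T) : s != [::] ->
  exists2 x, x \in s & forall z, z \in s -> f x <= f z.
Proof.
elim: s => [//|a s IH] _.
case: (eqVneq s [::]) => [->|sn].
  by exists a; rewrite ?mem_seq1 // => z; rewrite mem_seq1 => /eqP ->.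
have [b bs bmin] := IH sn.
case: (leP (f a) (f b)) => ab.
  exists a; first by rewrite mem_head.
  move=> z; rewrite in_cons => /orP[/eqP -> //|zs].
  exact: le_trans ab (bmin z zs).
exists b; first by rewrite in_cons bs orbT.
move=> z; rewrite in_cons => /orP[/eqP -> |zs]; first exact: ltW.
exact: bmin.
Qed.

Lemma supp_indep S y : in_pos S y -> (forall T, T `<` S -> ~ in_pos T y) ->
  forall mu : V -> R, \sum_(a <- S) mu a *: a = 0 -> forall a, a \in S -> mu a = 0.
Proof.
move=> [c [cpos yc]] Smin.
suff H : forall mu : V -> R, \sum_(a <- S) mu a *: a = 0 ->
    forall a, a \in S -> mu a <= 0.
  move=> mu hmu a aS; apply/eqP; rewrite eq_le H //=.
  rewrite -oppr_le0; apply: (H (fun a => - mu a)) => //.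
  rewrite (eq_bigr (fun b => - (mu b *: b))) => [|b _]; last by rewrite scaleNr.
  by rewrite sumrN hmu oppr0.
move=> mu hmu a aS; rewrite leNgt; apply/negP => mua.
pose P := [seq b <- (S : seq V) | 0 < mu b].
have Pn : P != [::].
  apply/eqP => P0; have : a \in P by rewrite mem_filter mua.
  by rewrite P0.
have [s sP smin] := seq_min (fun b => c b / mu b) Pn.
move: sP; rewrite mem_filter => /andP[mus sS].
pose t := c s / mu s.
have t0 : 0 <= t by rewrite divr_ge0 // ?cpos // ltW.
pose c' := fun b => (c b - t * mu b)%R.
have c'pos : forall b, b \in S -> 0 <= c' b.
  move=> b bS; rewrite /c' subr_ge0; case: (ltP 0 (mu b)) => mub.
    have := smin b; rewrite mem_filter mub bS => /(_ isT) h.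
    by rewrite /t -ler_pdivlMr.
  apply: (le_trans _ (cpos b bS)); exact: mulr_ge0_le0.
have c's : c' s = 0 by rewrite /c' /t divfK ?subrr // gt_eqF.
apply: (Smin (S `\ s)); first exact: fproperD1.
apply: (drop_zero sS c's c'pos).
rewrite yc; symmetry.
transitivity (\sum_(b <- S) c b *: b - t *: \sum_(b <- S) mu b *: b)%R.
  rewrite scaler_sumr -sumrB; apply: eq_bigr => b _.
  by rewrite /c' scalerBl scalerA.
by rewrite hmu scaler0 subr0.
Qed.

Lemma comb B x (l d : V -> R) (cx : R) : x = \sum_(z <- B) l z *: z ->
  (cx *: x + \sum_(z <- B) d z *: z = \sum_(z <- B) (cx * l z + d z) *: z)%R.
Proof.
move=> ->; rewrite scaler_sumr -big_split; apply: eq_bigr => z _.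
by rewrite scalerA scalerDl.
Qed.

Lemma conical_of B x (l : V -> R) p q1 q2 :
 (forall mu : V -> R, \sum_(z <- B) mu z *: z = 0 -> forall z, z \in B -> mu z = 0) ->
 x \notin B -> x = \sum_(z <- B) l z *: z ->
 p \in B -> l p < 0 -> q1 \in B -> q2 \in B -> q1 != q2 -> 0 < l q1 -> 0 < l q2 ->
 conical_position (x |` B).
Proof.
move=> Bind xB xl pB lp q1B q2B q12 lq1 lq2; split.
  move=> [c [c0 [c1 c2]]].
  rewrite big_fsetU1 //= in c1; rewrite big_fsetU1 //= (comb _ _ xl) in c2.
  have h := Bind _ (esym c2).
  have cx0 : 0 <= c x by apply: c0; rewrite fset1U1.
  have cq : 0 <= c q1 by apply: c0; exact: fset1Ur.
  have hq := h q1 q1B.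
  have cxz : c x = 0 by nra.
  move: c1; rewrite cxz add0r big1_fset => [|z zB _]; first by move/eqP; rewrite eq_sym oner_eq0.
  by have := h z zB; rewrite cxz mul0r add0r.
move=> a aA [c [c0 ha]].
case: (eqVneq a x) => [ax|ax].
  subst a; rewrite fsetU1K // in c0 ha.
  have h := Bind (fun z => (l z - c z)%R).
  suff hs : \sum_(z <- B) (l z - c z) *: z = 0.
    have := h hs p pB => /eqP; rewrite subr_eq0 => /eqP e.
    by have := c0 p pB; rewrite -e; lra.
  rewrite (eq_bigr (fun z => (l z *: z - c z *: z)%R)).
    by rewrite sumrB -xl -ha subrr.
  by move=> z _; rewrite scalerBl.
have aB : a \in B by move: aA; rewrite !inE (negbTE ax).
have eA : (x |` B) `\ a = x |` (B `\ a).
  apply/fsetP => z; rewrite !inE; case: (eqVneq z x) => [->|zx] /=.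
    by rewrite eq_sym ax.
  by [].
rewrite eA in c0 ha; rewrite big_fsetU1 ?inE ?negb_and ?xB ?orbT //= in ha.
pose d := fun z => if z == a then (-1 : R) else c z.
have hd : (c x *: x + \sum_(z <- B) d z *: z = 0)%R.
  rewrite (big_fsetD1 _ aB) /= /d eqxx scaleN1r.
  rewrite (@eq_fbigr _ _ _ _ _ _ _ (fun z => c z *: z)); last first.
    by move=> z; rewrite in_fsetD1 => /andP[/negbTE -> _].
  by rewrite addrCA -ha addNr.
rewrite (comb _ _ xl) in hd.
have h := Bind _ hd.
have [q [qB qa lq]] : exists q, [/\ q \in B, q != a & 0 < l q].
  case: (eqVneq q1 a) => [e|]; last by exists q1.
  by exists q2; split => //; rewrite -e eq_sym.
have cq : 0 <= c q by apply: c0; rewrite !inE qa qB orbT.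
have cx0 : 0 <= c x by apply: c0; rewrite fset1U1.
have hq := h q qB; rewrite /d (negbTE qa) in hq.
have cxz : c x = 0 by nra.
by have := h a aB; rewrite /d eqxx cxz mul0r add0r => /eqP; rewrite oppr_eq0 oner_eq0.
Qed.

Lemma free_of_indep (l : seq V) : uniq l ->
  (forall mu : V -> R, \sum_(a <- l) mu a *: a = 0 -> forall a, a \in l -> mu a = 0) ->
  free l.
Proof.
move=> ul H; rewrite -[l]in_tupleE; apply/freeP => k hk i.
pose mu := fun a => k (insubd i (index a l)).
have e : forall i' : 'I_(size l), mu (l`_i') = k i'.
  by move=> i'; rewrite /mu index_uniq // valKd.
have hs : \sum_(a <- l) mu a *: a = 0.
  rewrite (big_nth 0) big_mkord; apply: etrans hk; apply: eq_bigr => j _; by rewrite e.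
by rewrite -e; apply: H hs _ (mem_nth 0 (ltn_ord i)).
Qed.

Lemma indep_of_free (l : seq V) (mu : V -> R) : free l ->
  \sum_(a <- l) mu a *: a = 0 -> forall a, a \in l -> mu a = 0.
Proof.
move=> fl h a al; have [k _ kk] := free_span fl (mem0v <<l>>%VS).
have e1 := kk mu (esym h) a al.
have e2 := kk (fun _ => 0) _ a al.
rewrite e1 e2 // big1 // => b _; by rewrite scale0r.
Qed.

Lemma sum_seq_fset (l : seq V) (F : V -> V) : uniq l ->
  \sum_(a <- seq_fset tt l) F a = \sum_(a <- l) F a.
Proof.
move=> u; apply: perm_big; rewrite (perm_trans (seq_fset_perm tt l)) //.
by rewrite undup_id.
Qed.

Lemma extend (X s : seq V) : free s ->
  exists e, [/\ {subset e <= X}, free (e ++ s) & (<<X>> <= <<e ++ s>>)%VS].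
Proof.
elim: X s => [|x X IH] s fs.
  by exists [::]; split => //; rewrite span_nil sub0v.
case: (boolP (x \in <<s>>%VS)) => xs.
  have [e [eX fe sub]] := IH s fs.
  exists e; split => //.
    by move=> z /eX; rewrite in_cons => ->; rewrite orbT.
  apply/span_subvP => z; rewrite in_cons => /orP[/eqP ->|zX].
    by apply: (subvP (sub_span _)) xs => w ws; rewrite mem_cat ws orbT.
  exact: (subvP sub) _ (memv_span zX).
have fxs : free (x :: s) by rewrite free_cons xs.
have [e [eX fe sub]] := IH _ fxs.
exists (rcons e x); rewrite cat_rcons; split => //.
  move=> z; rewrite mem_rcons in_cons => /orP[/eqP ->|/eX zX]; by rewrite ?mem_head // in_cons zX orbT.
apply/span_subvP => z; rewrite in_cons => /orP[/eqP ->|zX].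
  by apply: memv_span; rewrite mem_cat mem_head orbT.
exact: (subvP sub) _ (memv_span zX).
Qed.

Lemma full_span X : in_interior_conv X 0 -> forall v : V, v \in <<(X : seq V)>>%VS.
Proof.
move=> [eps [eps0 H]].
have conv_span : forall w, in_conv X w -> w \in <<(X : seq V)>>%VS.
  move=> w [c [_ [_ ->]]]; rewrite big_seq; apply: memv_suml => a aX; apply: memvZ.
  exact: memv_span.
have de : forall j, 'e_j \in <<(X : seq V)>>%VS.
  move=> j; have : (eps / 2) *: 'e_j \in <<(X : seq V)>>%VS.
    apply: conv_span; apply: H => j'; rewrite !mxE /= subr0.
    case: (j' == j); rewrite /= ?mulr1 ?mulr0 ?normr0 // ger0_norm; lra.
  move=> h; have := memvZ (2 / eps) h; rewrite scalerA.
  have -> : 2 / eps * (eps / 2) = 1 by field; rewrite gt_eqF.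
  by rewrite scale1r.
move=> v; rewrite (row_sum_delta v); apply: memv_suml => j _; apply: memvZ; exact: de.
Qed.

End Helpers.

Local Open Scope ring_scope.

Theorem proposition5p4 (R : realType) (n : nat) (X : {fset 'rV[R]_n})
    (k : nat) (Xs : 'I_k -> {fset 'rV[R]_n})
    (x xi xj y : 'rV[R]_n) (i j : 'I_k) :
  standing_setting X ->
  skeleton X Xs ->
  x \in X ->
  (forall l : 'I_k, ~ in_span (Xs l) x) ->
  xi \in Xs i -> xj \in Xs j -> i != j ->
  in_pos [fset xi; xj] x ->
  y \in X -> y \notin Xs i -> in_span (Xs i) y ->
  forall S : {fset 'rV[R]_n}, is_support (Xs i) y S -> xi \notin S.
Proof.
move=> [X0 Hint Hmult Hgood] Hsk xX Hnx xiI xjJ ij Hpos yX yNI yspan S [SI Spos Smin].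
have Hsk' := Hsk; case: Hsk' => [Hsub Hdisj Hsimp Hds].
apply/negP => xiS.
have ji : j != i by rewrite eq_sym.
have xiX : xi \in X := fsubsetP (Hsub i) _ xiI.
have xjX : xj \in X := fsubsetP (Hsub j) _ xjJ.
have xjNI : xj \notin Xs i by move/fdisjointP: (Hdisj j i ji); apply.
have xixj : xi != xj by apply/eqP => e; move: xjNI; rewrite -e xiI.
have nz : forall v, v \in X -> v != 0.
  by move=> v vX; apply/eqP => e; move: X0; rewrite -e vX.
have [a [b [a0 b0 xab]]] : exists a b : R, [/\ 0 <= a, 0 <= b & x = a *: xi + b *: xj].
  move: Hpos => [c [c0 ->]]; exists (c xi), (c xj); split.
  - by apply: c0; rewrite !inE eqxx.
  - by apply: c0; rewrite !inE eqxx orbT.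
  - by rewrite big_fsetU1 /= ?big_seq_fset1 // inE.
have apos : 0 < a.
  rewrite lt_neqAle a0 andbT; apply/eqP=> e; apply: (Hnx j).
  by rewrite xab -e scale0r add0r; apply: span_scale; exact: span_mem.
have bpos : 0 < b.
  rewrite lt_neqAle b0 andbT; apply/eqP=> e; apply: (Hnx i).
  by rewrite xab -e scale0r addr0; apply: span_scale; exact: span_mem.
have Sind := supp_indep Spos Smin.
move: Spos => [c [c0 yc]].
have cxi : 0 < c xi.
  rewrite lt_neqAle c0 // andbT; apply/eqP => e.
  exact: (Smin _ (fproperD1 xiS) (drop_zero xiS (esym e) c0 yc)).
pose S' := S `\ xi.
have yc' : y = c xi *: xi + \sum_(z <- S') c z *: z by rewrite yc (big_fsetD1 _ xiS).
have S'I : S' `<=` Xs i.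
  apply/fsubsetP => z; rewrite in_fsetD1 => /andP[_ zS]; exact: fsubsetP SI z zS.
have [s0 s0S' cs0] : exists2 s0, s0 \in S' & 0 < c s0.
  case: (fset_0Vmem S') => [S'0 | [s0 s0S']].
    exfalso; move: yc'; rewrite S'0 big_seq_fset0 addr0 => e.
    apply: (Hmult y xi yX xiX _ (c xi) cxi e).
    by apply/eqP => e'; move: yNI; rewrite e' xiI.
  exists s0 => //.
  have s0S : s0 \in S by move: s0S'; rewrite in_fsetD1 => /andP[].
  rewrite lt_neqAle c0 // andbT; apply/eqP => e.
  exact: (Smin _ (fproperD1 s0S) (drop_zero s0S (esym e) c0 yc)).
have s0S : s0 \in S by move: s0S'; rewrite in_fsetD1 => /andP[].
have s0xi : s0 != xi by move: s0S'; rewrite in_fsetD1 => /andP[].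
have xjspan : in_span (Xs j) xj := span_mem xjJ.
have yxj : y != xj.
  apply/eqP => e.
  have [_ h] := ds2 Hsk ij yspan (span_scale (-1) xjspan) (etrans (congr1 (fun v => y + v) (scaleN1r xj)) (etrans (congr1 (fun v => v - xj) e) (subrr xj))).
  move: h; rewrite scaleN1r => h; have : xj = 0 by rewrite -[xj]opprK h oppr0.
  by move/eqP; rewrite (negbTE (nz xj xjX)).
have yNS' : y \notin S' by apply: contra yNI => /(fsubsetP S'I).
have xjNS' : xj \notin S' by apply: contra xjNI => /(fsubsetP S'I).
pose s := [:: y, xj & (S' : seq _)].
have us : uniq s by rewrite /= in_cons negb_or yxj yNS' xjNS' fset_uniq.
have fs : free s.
  apply: free_of_indep us _ => mu hmu.
  rewrite !big_cons in hmu.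
  have h1 : (mu y *: y + \sum_(z <- S') mu z *: z) + mu xj *: xj = 0.
    by apply: etrans hmu; rewrite -addrA [X in _ + X]addrC.
  have [hu hw] := ds2 Hsk ij (span_add (span_scale (mu y) yspan) (span_sub S'I (span_sum _ _))) (span_scale (mu xj) xjspan) h1.
  have muxj : mu xj = 0.
    by move/eqP: hw; rewrite scaler_eq0 (negbTE (nz xj xjX)) orbF => /eqP.
  pose nu := fun z => if z == xi then mu y * c xi else mu y * c z + mu z.
  have hnu : \sum_(z <- S) nu z *: z = 0.
    apply: etrans hu; rewrite (big_fsetD1 _ xiS) /= /nu eqxx.
    rewrite yc' scalerDr scalerA -addrA; congr (_ + _).
    rewrite scaler_sumr -big_split; apply: eq_fbigr => z.
    by rewrite in_fsetD1 => /andP[zxi _] _; rewrite (negbTE zxi) scalerDl scalerA.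
  have muy : mu y = 0.
    have := Sind nu hnu xi xiS; rewrite /nu eqxx => /eqP.
    by rewrite mulf_eq0 (gt_eqF cxi) orbF => /eqP.
  move=> z; rewrite !in_cons => /or3P[/eqP->|/eqP->|zS'] //.
  have zS : z \in S by move: zS'; rewrite in_fsetD1 => /andP[].
  have zxi : z != xi by move: zS'; rewrite in_fsetD1 => /andP[].
  by have := Sind nu hnu z zS; rewrite /nu (negbTE zxi) muy mul0r add0r.
have [e [eX fe subX]] := extend (X : seq _) fs.
pose l := e ++ s.
have ul : uniq l := free_uniq fe.
have szl : size l = n.
  have full : <<l>>%VS = fullv.
    apply/eqP; rewrite eqEsubv subvf /=; apply/subvP => v _.
    by apply: (subvP subX); exact: full_span Hint v.
  move/eqP: fe => <-; rewrite full dimvf /= dim_matrix; exact: mul1n.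
have nes : forall z, z \in e -> z \notin s.
  move: ul; rewrite cat_uniq => /and3P[_ /hasPn H _] z ze.
  by apply/negP => zs; move: (H z zs); rewrite ze.
pose B := seq_fset tt l.
have memB : forall z, (z \in B) = (z \in l) := seq_fsetE tt l.
have sumB : forall F : 'rV[R]_n -> 'rV[R]_n, \sum_(z <- B) F z = \sum_(z <- l) F z.
  by move=> F; apply: sum_seq_fset.
have Bind : forall mu : 'rV[R]_n -> R, \sum_(z <- B) mu z *: z = 0 ->
    forall z, z \in B -> mu z = 0.
  move=> mu; rewrite sumB => h z; rewrite memB; exact: indep_of_free fe h z.
pose lf := fun z => if z == y then a / c xi else if z == xj then b
  else if z \in S' then - (a / c xi * c z) else 0.
have lfS' : forall z, z \in S' -> lf z = - (a / c xi * c z).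
  move=> z zS'; rewrite /lf zS'.
  have -> : (z == y) = false by apply/negbTE; apply: contraNneq yNS' => <-.
  by have -> : (z == xj) = false by apply/negbTE; apply: contraNneq xjNS' => <-.
have lfy : lf y = a / c xi by rewrite /lf eqxx.
have lfxj : lf xj = b by rewrite /lf eq_sym (negbTE yxj) eqxx.
have xl : x = \sum_(z <- B) lf z *: z.
  rewrite sumB big_cat /= big_seq big1 => [|z ze]; last first.
    have := nes z ze; rewrite !in_cons !negb_or => /and3P[zy zxj zS'].
    by rewrite /lf (negbTE zy) (negbTE zxj) (negbTE zS') scale0r.
  rewrite add0r !big_cons lfy lfxj.
  rewrite (@eq_fbigr _ _ _ _ _ _ _ (fun z => - ((a / c xi) *: (c z *: z)))); last first.
    by move=> z zS' _; rewrite lfS' // scalerA scaleNr.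
  rewrite sumrN -scaler_sumr.
  rewrite xab yc' scalerDr scalerA.
  have -> : a / c xi * c xi = a by field; rewrite gt_eqF.
  set u := a *: xi; set v := b *: xj; set w := _ *: \sum_(_ <- _) _.
  by rewrite addrA (addrAC u w v) addrK.
have xNB : x \notin B.
  apply/negP => xB.
  pose mu := fun z => lf z - (z == x)%:R.
  have hmu : \sum_(z <- B) mu z *: z = 0.
    rewrite (eq_bigr (fun z => lf z *: z - (z == x)%:R *: z)); last first.
      by move=> z _; rewrite scalerBl.
    rewrite sumrB -xl (sum_single xB) ?eqxx ?scale1r ?subrr //.
    by move=> z _ /negbTE ->; rewrite scale0r.
  have := Bind mu hmu x xB; rewrite /mu eqxx.
  have -> : lf x = 0.
    have xy : (x == y) = false.
      by apply/negbTE/eqP => e'; apply: (Hnx i); rewrite e'.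
    have xxj : (x == xj) = false.
      by apply/negbTE/eqP => e'; apply: (Hnx j); rewrite e'.
    have xS' : (x \in S') = false.
      by apply/negbTE/negP => xS'; apply: (Hnx i); apply: span_mem; exact: fsubsetP S'I x xS'.
    by rewrite /lf xy xxj xS'.
  by move/eqP; rewrite sub0r oppr_eq0 oner_eq0.
have inB : forall z, z \in s -> z \in B.
  by move=> z zs; rewrite memB mem_cat zs orbT.
have Asub : (x |` B `<=` X)%fset.
  apply/fsubsetP => z; rewrite !inE => /orP[/eqP -> //|]; rewrite memB mem_cat.
  case/orP => [/eX //|]; rewrite !in_cons => /or3P[/eqP -> //|/eqP -> //|zS'].
  exact: fsubsetP (Hsub i) z (fsubsetP S'I z zS').
have Acard : #|` (x |` B)%fset| = n.+1.
  by rewrite cardfsU1 xNB size_seq_fset undup_id // szl.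
apply: (Hgood _ Asub Acard).
apply: (conical_of Bind xNB xl (p := s0) (q1 := y) (q2 := xj)).
- by apply: inB; rewrite !in_cons s0S' !orbT.
- by rewrite lfS' // oppr_lt0; apply: mulr_gt0 => //; apply: divr_gt0.
- by apply: inB; rewrite mem_head.
- by apply: inB; rewrite !in_cons eqxx orbT.
- exact: yxj.
- by rewrite lfy divr_gt0.
- by rewrite lfxj.
Qed.
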